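(* For rational $\delta>0$ let $e(\delta)$ be the least integer $e$ with $2^{-e}<\delta$. Let $g(m,\delta)=(m-1)e(\delta)+\frac{(m-1)m}{2}$, $\bar g(x,k,0)=x+k+1$, $\bar g(x,k,i+1)=g(\bar g(x,k,i),1/k)$, $h(\ell,m,\delta)=2^{\,e(\delta)\,\ell\,2^{5m}}$ and $\bar h(x,n,k)=h(2^x,n,1/k)\,k^{2^x}$. Let $k\ge1$ and $i\ge0$. If $X$ is a nonempty finite set with $|X|\ge\bar h(\min X,\bar g(\min X,k,i),k)$, then $X$ is $(\omega,k,i)$-superpersistent.
   Context: Strings are finite binary strings with $\preceq$ the initial-segment order; $2^i$ also denotes the set of strings of length $i$; a tree is a set of strings closed under initial segments; a leaf of a finite tree is a $\preceq$-maximal element. For finite $X=\{x_0<\dots<x_n\}$, a finite tree $T$ is $X$-quasistrong if $T\cap 2^{x_i}\ne\emptyset$ for all $i\le n$ and for each $i<n$ every $\sigma\in T\cap2^{x_i}$ has exactly two incompatible extensions in $T\cap 2^{x_{i+1}}$. $T$ is $(C,X)$-prehomogeneous if there is a color $c$ such that for all $i<n$, $\sigma\in T\cap 2^{x_i}$, $\tau\in T\cap 2^{x_{i+1}}$ with $\sigma\prec\tau$, some $\zeta\in T$ with $\sigma\preceq\zeta\preceq\tau$ has $C(\zeta)=c$. $X$ is $\omega$-large if $|X|>\min X$. Persistence ($k\ge1$, $X$ nonempty finite): $X$ is $(\omega,k,0)$-persistent iff $\omega$-large; for $i\ge1$, $X$ is $(\omega,k,i)$-persistent iff $X$ contains an $(\omega,k,i-1)$-persistent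 subset $Y$ such that for every $X$-quasistrong tree $T$ and every $C:T\cap 2^{\max X}\to k$ there exist $c<k$ and a $Y$-quasistrong finite tree $S\subseteq T$ all of whose leaves have extensions in $C^{-1}(c)$. Superpersistence: $X$ is $(\omega,k,i)$-superpersistent if for every family $\{T_\rho:\rho\in 2^{\min X}\}$ of $X$-quasistrong trees and every $C:2^{<\mathbb{N}}\to k$ there exist $Y\subseteq X$ and trees $S_\rho\subseteq T_\rho$ such that $Y$ is $(\omega,k,i)$-persistent and each $S_\rho$ is $Y$-quasistrong and $(C,Y)$-prehomogeneous. *)

(* Defs.v *)
From mathcomp Require Import all_boot.
Set Implicit Arguments. Unset Strict Implicit. Unset Printing Implicit Defensive.

(* Finite binary strings; s ⪯ t is [prefix s t]. *)
Definition str := seq bool.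

(* A finite tree: a finite set of strings (given by a list, membership only
   matters) closed under initial segments. *)
Definition is_tree (T : seq str) : Prop :=
  forall s t : str, t \in T -> prefix s t -> s \in T.

Definition incompatible (s t : str) : bool := ~~ prefix s t && ~~ prefix t s.

Definition is_leaf (S : seq str) (s : str) : Prop :=
  s \in S /\ forall t, t \in S -> prefix s t -> t = s.

(* A nonempty finite set X = {x_0 < ... < x_n} of naturals is represented by
   the strictly increasing list [:: x_0; ...; x_n] (i.e. sorted ltn X). *)
Definition minX (X : seq nat) : nat := head 0 X.
Definition maxX (X : seq nat) : nat := last 0 X.

Definition omega_large (X : seq nat) : Prop := minX X < size X.

Definition quasistrong (X : seq nat) (T : seq str) : Prop :=
  (forall i, i < size X -> exists s, s \in T /\ size s = nth 0 X i) /\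
  (forall i, i.+1 < size X -> forall s, s \in T -> size s = nth 0 X i ->
     exists t1 t2,
       t1 \in T /\ t2 \in T /\
       size t1 = nth 0 X i.+1 /\ size t2 = nth 0 X i.+1 /\
       prefix s t1 /\ prefix s t2 /\ incompatible t1 t2 /\
       (forall t, t \in T -> size t = nth 0 X i.+1 -> prefix s t ->
          t = t1 \/ t = t2)).

Definition prehomogeneous (k : nat) (C : str -> 'I_k) (X : seq nat)
    (T : seq str) : Prop :=
  exists c : 'I_k, forall i, i.+1 < size X ->
    forall s t, s \in T -> t \in T ->
      size s = nth 0 X i -> size t = nth 0 X i.+1 -> prefix s t ->
      exists z, z \in T /\ prefix s z /\ prefix z t /\ C z = c.

(* (omega,k,i)-persistence.  A colouring C : T ∩ 2^{max X} -> k is given as a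
   total function str -> 'I_k; only its values on T ∩ 2^{max X} are used. *)
Fixpoint persistent (k i : nat) (X : seq nat) : Prop :=
  match i with
  | 0 => omega_large X
  | i'.+1 =>
      exists Y : seq nat,
        sorted ltn Y /\ {subset Y <= X} /\ persistent k i' Y /\
        forall T : seq str, is_tree T -> quasistrong X T ->
        forall C : str -> 'I_k,
          exists (c : 'I_k) (S : seq str),
            is_tree S /\ {subset S <= T} /\ quasistrong Y S /\
            forall s, is_leaf S s ->
              exists t, t \in T /\ size t = maxX X /\ prefix s t /\ C t = c
  end.

(* (omega,k,i)-superpersistence. The family {T_rho : rho in 2^{min X}} is a
   function Tf : str -> seq str, only used on strings of length min X. *)
Definition superpersistent (k i : nat) (X : seq nat) : Prop :=
  forall Tf : str -> seq str,
    (forall r : str, size r = minX X -> is_tree (Tf r) /\ quasistrong X (Tf r)) ->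
  forall C : str -> 'I_k,
    exists (Y : seq nat) (Sf : str -> seq str),
      sorted ltn Y /\ {subset Y <= X} /\ persistent k i Y /\
      forall r : str, size r = minX X ->
        is_tree (Sf r) /\ {subset Sf r <= Tf r} /\
        quasistrong Y (Sf r) /\ prehomogeneous C Y (Sf r).

(* e(1/k): the least e with 2^{-e} < 1/k, i.e. (for k >= 1) the least
   natural number e with k < 2^e. *)
Definition e_inv (k : nat) : nat :=
  ex_minn (ex_intro (fun n => k < 2 ^ n) k (ltn_expl k (ltnSn 1))).

Definition g_fun (m k : nat) : nat := m.-1 * e_inv k + (m.-1 * m) %/ 2.

Fixpoint gbar (x k i : nat) : nat :=
  match i with
  | 0 => x + k + 1
  | i'.+1 => g_fun (gbar x k i') k
  end.

Definition h_fun (l m k : nat) : nat := 2 ^ (e_inv k * l * 2 ^ (5 * m)).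

Definition hbar (x n k : nat) : nat := h_fun (2 ^ x) n k * k ^ (2 ^ x).

(* Main.v *)
Require Import Defs.
From mathcomp Require Import all_boot zify.
From Stdlib Require Import Classical ClassicalEpsilon.
Set Implicit Arguments. Unset Strict Implicit. Unset Printing Implicit Defensive.

Lemma prefix_eq_size (s t : str) : prefix s t -> size s = size t -> s = t.
Proof. by rewrite prefixE => /eqP Ht Hs; rewrite -Ht Hs take_size. Qed.

Lemma prefix_cmp (a b c : str) : prefix a c -> prefix b c -> prefix a b || prefix b a.
Proof.
move=> Ha Hb; rewrite prefixE in Ha; rewrite prefixE in Hb.
move/eqP: Ha => Ha; move/eqP: Hb => Hb.
case: (leqP (size a) (size b)) => H.
- have -> : prefix a b by rewrite prefixE -Hb take_takel // Ha.
  done.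
- have -> : prefix b a by rewrite prefixE -Ha take_takel ?Hb //; exact: ltnW.
  by rewrite orbT.
Qed.

Lemma incompat_ext (a b a' b' : str) :
  incompatible a b -> prefix a a' -> prefix b b' -> incompatible a' b'.
Proof.
rewrite /incompatible => /andP[Hab Hba] Ha Hb; apply/andP; split; apply/negP => H.
- have Hab' : prefix a b' := prefix_trans Ha H.
  by case/orP: (prefix_cmp Hab' Hb) => H'; [move: Hab; rewrite H' | move: Hba; rewrite H'].
- have Hba' : prefix b a' := prefix_trans Hb H.
  by case/orP: (prefix_cmp Ha Hba') => H'; [move: Hab; rewrite H' | move: Hba; rewrite H'].
Qed.

Lemma neq_incompat (a b : str) : size a = size b -> a != b -> incompatible a b.
Proof.
move=> Hs Hn; rewrite /incompatible; apply/andP; split; apply/negP => H.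
- by move: Hn; rewrite (prefix_eq_size H Hs) eqxx.
- by move: Hn; rewrite (prefix_eq_size H (esym Hs)) eqxx.
Qed.

Lemma incompat_neq (a b : str) : incompatible a b -> a != b.
Proof. by rewrite /incompatible => /andP[H _]; apply/eqP => E; rewrite E prefix_refl in H. Qed.

Lemma prefix_size_le_cmp (z s t : str) : prefix s t -> prefix z t -> size z <= size s -> prefix z s.
Proof.
move=> Hs Hz Hle; case/orP: (prefix_cmp Hz Hs) => // H.
have Es : size s = size z by apply/eqP; rewrite eqn_leq size_prefix.
by rewrite (prefix_eq_size H Es) prefix_refl.
Qed.

Fixpoint good (T : seq str) (E : str -> str -> Prop) (Q : str -> Prop) (P : seq nat) (s : str) : Prop :=
  match P with
  | [::] => Q s
  | p :: P' => exists t1 t2, t1 \in T /\ t2 \in T /\ size t1 = p /\ size t2 = p /\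
      prefix s t1 /\ prefix s t2 /\ incompatible t1 t2 /\ E s t1 /\ E s t2 /\
      good T E Q P' t1 /\ good T E Q P' t2
  end.

Definition pref_list (s : str) : seq str := [seq take i s | i <- iota 0 (size s).+1].

Lemma mem_pref_list (s z : str) : (z \in pref_list s) = prefix z s.
Proof.
apply/mapP/idP.
- by case=> i _ ->; apply: prefix_take.
- move=> H; exists (size z); first by rewrite mem_iota /= add0n ltnS size_prefix.
  by move: H; rewrite prefixE => /eqP.
Qed.

Lemma sorted_nth_ge (x : nat) (L : seq nat) i :
  sorted ltn (x :: L) -> i < size (x :: L) -> x <= nth 0 (x :: L) i.
Proof.
move=> Hs Hi; case: i Hi => [//|i] Hi.
apply: ltnW; have := @sorted_ltn_nth _ ltn ltn_trans 0 (x :: L) Hs 0 i.+1.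
by apply => //; rewrite inE.
Qed.

Lemma cross (Sa Sb : seq str) ta tb a t :
  incompatible ta tb -> size ta = size tb ->
  (forall z, z \in Sa -> prefix z ta || prefix ta z) ->
  (forall z, z \in Sb -> prefix z tb || prefix tb z) ->
  a \in Sa -> t \in Sb -> size ta <= size a -> size tb <= size t -> prefix a t -> False.
Proof.
move=> Hinc Hsz Ha Hb aS tS Hla Hlt Hat.
have Hta : prefix ta a.
  case/orP: (Ha _ aS) => // H.
  by rewrite -(prefix_eq_size H (anti_leq (introT andP (conj (size_prefix H) Hla)))) prefix_refl.
have Htb : prefix tb t.
  case/orP: (Hb _ tS) => // H.
  by rewrite -(prefix_eq_size H (anti_leq (introT andP (conj (size_prefix H) Hlt)))) prefix_refl.
have Hta' := prefix_trans Hta Hat.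
case/orP: (prefix_cmp Hta' Htb) => H.
- by move: (incompat_neq Hinc); rewrite (prefix_eq_size H Hsz) eqxx.
- by move: (incompat_neq Hinc); rewrite (prefix_eq_size H (esym Hsz)) eqxx.
Qed.

Lemma incompat_sym a b : incompatible a b -> incompatible b a.
Proof. by rewrite /incompatible andbC. Qed.

Definition edges_ok (E : str -> str -> Prop) (Y : seq nat) (S : seq str) :=
  forall i, i.+1 < size Y -> forall a b, a \in S -> b \in S ->
    size a = nth 0 Y i -> size b = nth 0 Y i.+1 -> prefix a b -> E a b.

Lemma good_tree T E Q : is_tree T -> forall P s, s \in T -> sorted ltn (size s :: P) ->
  good T E Q P s ->
  exists S, is_tree S /\ {subset S <= T} /\ s \in S /\
    (forall z, z \in S -> prefix z s || prefix s z) /\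
    quasistrong (size s :: P) S /\ edges_ok E (size s :: P) S /\
    (forall l, is_leaf S l -> Q l).
Proof.
move=> HT; elim=> [|p P IH] s sT Hsort.
- move=> HQ; exists (pref_list s); split; [|split; [|split; [|split; [|split; [|split]]]]].
  + move=> y z; rewrite !mem_pref_list => Hz Hy; exact: prefix_trans Hy Hz.
  + by move=> z; rewrite mem_pref_list => Hz; apply: HT sT Hz.
  + by rewrite mem_pref_list prefix_refl.
  + by move=> z; rewrite mem_pref_list => ->.
  + split.
    * move=> i; rewrite ltnS leqn0 => /eqP ->; exists s; split => //.
      by rewrite mem_pref_list prefix_refl.
    * by move=> i.
  + by move=> i.
  + move=> l [lS Hl]; have := Hl s; rewrite mem_pref_list prefix_refl => /(_ isT).
    by move: lS; rewrite mem_pref_list => H /(_ H) <-.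
- case=> t1 [t2 [t1T [t2T [Hs1 [Hs2 [Hp1 [Hp2 [Hinc [E1 [E2 [G1 G2]]]]]]]]]]].
  have Hlt : size s < p by move: Hsort => /= /andP[].
  have Hsort' : sorted ltn (p :: P) by move: Hsort => /= /andP[].
  have [S1 [tr1 [sub1 [t1S1 [cmp1 [[qa1 qb1] [ed1 lf1]]]]]]] := IH t1 t1T ltac:(by rewrite Hs1) G1.
  have [S2 [tr2 [sub2 [t2S2 [cmp2 [[qa2 qb2] [ed2 lf2]]]]]]] := IH t2 t2T ltac:(by rewrite Hs2) G2.
  rewrite Hs1 in qa1 qb1 ed1; rewrite Hs2 in qa2 qb2 ed2.
  have Hsz12 : size t1 = size t2 by rewrite Hs1 Hs2.
  have Hinc' := incompat_sym Hinc.
  have cmpS : forall z, z \in S1 ++ S2 -> prefix z s || prefix s z.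
    move=> z; rewrite mem_cat => /orP[] zS.
    * case/orP: (cmp1 _ zS) => H; first exact: prefix_cmp H Hp1.
      by rewrite (prefix_trans Hp1 H) orbT.
    * case/orP: (cmp2 _ zS) => H; first exact: prefix_cmp H Hp2.
      by rewrite (prefix_trans Hp2 H) orbT.
  have eqs : forall z, z \in S1 ++ S2 -> size z = size s -> z = s.
    move=> z zS Hz; case/orP: (cmpS _ zS) => H; first exact: prefix_eq_size H Hz.
    exact: esym (prefix_eq_size H (esym Hz)).
  have lev1 : forall b, b \in S1 ++ S2 -> size b = p -> prefix s b -> b = t1 \/ b = t2.
    move=> b; rewrite mem_cat => /orP[] bS Hb _.
    * left; case/orP: (cmp1 _ bS) => H; first exact: prefix_eq_size H (etrans Hb (esym Hs1)).
      exact: esym (prefix_eq_size H (etrans Hs1 (esym Hb))).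
    * right; case/orP: (cmp2 _ bS) => H; first exact: prefix_eq_size H (etrans Hb (esym Hs2)).
      exact: esym (prefix_eq_size H (etrans Hs2 (esym Hb))).
  have geP : forall i, i < size (p :: P) -> p <= nth 0 (p :: P) i.
    by move=> i Hi; apply: sorted_nth_ge.
  have geP' : forall i, i < size (p :: P) -> p <= nth 0 [:: size s, p & P] i.+1.
    by move=> i Hi; apply: geP.
  exists (S1 ++ S2); split; [|split; [|split; [|split; [|split; [|split]]]]].
  + move=> y z; rewrite !mem_cat => /orP[] zS Hy.
    * by rewrite (tr1 _ _ zS Hy).
    * by rewrite (tr2 _ _ zS Hy) orbT.
  + move=> z; rewrite mem_cat => /orP[]; [exact: sub1 | exact: sub2].
  + by rewrite mem_cat (tr1 _ _ t1S1 Hp1).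
  + exact: cmpS.
  + split.
    * case=> [_|i Hi].
      - by exists s; rewrite mem_cat (tr1 _ _ t1S1 Hp1).
      - have [z [zS Hz]] := qa1 i Hi; by exists z; rewrite mem_cat zS.
    * case=> [Hi a aS Ha|i Hi a aS Ha].
      - have -> := eqs _ aS Ha.
        exists t1, t2; do 2 (split; first by rewrite mem_cat ?t1S1 ?t2S2 ?orbT).
        do 5 (split => //).
      - have Hpa : p <= size a by rewrite Ha; apply: geP; move: Hi => /=; clear; lia.
        move: aS; rewrite mem_cat => /orP[] aS.
        + have [u1 [u2 [u1S [u2S [Hu1 [Hu2 [Hau1 [Hau2 [Hui Huniq]]]]]]]]] := qb1 i Hi a aS Ha.
          exists u1, u2; rewrite !mem_cat u1S u2S; do 7 (split => //).
          move=> t; rewrite mem_cat => /orP[] tS Ht Hat; first exact: Huniq.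
          exfalso; apply: (cross Hinc Hsz12 cmp1 cmp2 aS tS) => //; first by rewrite Hs1.
          rewrite Hs2 Ht; apply: geP'; move: Hi => /=; clear; lia.
        + have [u1 [u2 [u1S [u2S [Hu1 [Hu2 [Hau1 [Hau2 [Hui Huniq]]]]]]]]] := qb2 i Hi a aS Ha.
          exists u1, u2; rewrite !mem_cat u1S u2S !orbT; do 7 (split => //).
          move=> t; rewrite mem_cat => /orP[] tS Ht Hat; last exact: Huniq.
          exfalso; apply: (cross Hinc' (esym Hsz12) cmp2 cmp1 aS tS) => //; first by rewrite Hs2.
          rewrite Hs1 Ht; apply: geP'; move: Hi => /=; clear; lia.
  + case=> [Hi a b aS bS Ha Hb Hab|i Hi a b aS bS Ha Hb Hab].
    * have Eas := eqs _ aS Ha; rewrite Eas in Hab *.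
      by case: (lev1 _ bS Hb Hab) => ->.
    * have Hpa : p <= size a by rewrite Ha; apply: geP; move: Hi => /=; clear; lia.
      have Hpb : p <= size b by rewrite Hb; apply: geP'; move: Hi => /=; clear; lia.
      move: aS bS; rewrite !mem_cat => /orP[] aS /orP[] bS.
      - exact: ed1 Hi a b aS bS Ha Hb Hab.
      - by exfalso; apply: (cross Hinc Hsz12 cmp1 cmp2 aS bS); rewrite ?Hs1 ?Hs2.
      - by exfalso; apply: (cross Hinc' (esym Hsz12) cmp2 cmp1 aS bS); rewrite ?Hs1 ?Hs2.
      - exact: ed2 Hi a b aS bS Ha Hb Hab.
  + move=> l [lS Hl]; move: lS; rewrite mem_cat => /orP[] lS.
    * apply: lf1; split => // t tS; apply: Hl; rewrite mem_cat tS //.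
    * apply: lf2; split => // t tS; apply: Hl; rewrite mem_cat tS orbT //.
Qed.

Definition at_ (T : seq str) (X : seq nat) (j : nat) (u : str) : Prop :=
  u \in T /\ size u = nth 0 X j.

Section Skel.
Variables (T : seq str) (X : seq nat).
Hypothesis HQ : quasistrong X T.

Lemma kids j u : at_ T X j u -> j.+1 < size X ->
  exists u0 u1, at_ T X j.+1 u0 /\ at_ T X j.+1 u1 /\ prefix u u0 /\ prefix u u1 /\
    incompatible u0 u1.
Proof.
move=> [uT Hu] Hj; have [_ Hb] := HQ.
have [u0 [u1 [u0T [u1T [H0 [H1 [P0 [P1 [Hi _]]]]]]]]] := Hb j Hj u uT Hu.
by exists u0, u1.
Qed.

Lemma ext j j' u : at_ T X j u -> j <= j' -> j' < size X -> exists t, at_ T X j' t /\ prefix u t.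
Proof.
move=> Hu; elim: j' => [|j' IH].
- rewrite leqn0 => /eqP E _; subst j; by exists u; split => //; apply: prefix_refl.
- rewrite leq_eqVlt => /orP[/eqP E|Hlt] Hs.
  + subst j; by exists u; split => //; apply: prefix_refl.
  + have [t [Ht Hp]] := IH Hlt (ltnW Hs).
    have [u0 [_ [H0 [_ [P0 _]]]]] := kids Ht Hs.
    exists u0; split => //; exact: prefix_trans Hp P0.
Qed.

Lemma root_ex : 0 < size X -> exists u, at_ T X 0 u.
Proof. move=> H; have [Ha _] := HQ; have [s [sT Hs]] := Ha 0 H; by exists s. Qed.

Lemma php (k : nat) (R : str -> 'I_k -> Prop) : forall d j s, at_ T X j s -> j + d < size X ->
  (forall t, at_ T X (j + d) t -> prefix s t -> exists c, R t c) ->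
  (exists t t' c, at_ T X (j + d) t /\ at_ T X (j + d) t' /\ prefix s t /\ prefix s t' /\
     t != t' /\ R t c /\ R t' c) \/
  (exists A : {set 'I_k}, 2 ^ d <= #|A| /\
     forall c, c \in A -> exists t, at_ T X (j + d) t /\ prefix s t /\ R t c).
Proof.
elim=> [|d IH] j s Hs Hj HR.
- right; have [c Hc] := HR s ltac:(by rewrite addn0) (prefix_refl s).
  exists [set c]; rewrite cards1; split => // c'; rewrite inE => /eqP ->.
  by exists s; rewrite addn0; split => //; split => //; apply: prefix_refl.
- have Hk : j.+1 < size X by move: Hj; clear; lia.
  have [s0 [s1 [H0 [H1 [P0 [P1 Hinc]]]]]] := kids Hs Hk.
  have Hj' : j.+1 + d < size X by move: Hj; clear; lia.
  have HR0 : forall t, at_ T X (j.+1 + d) t -> prefix s0 t -> exists c, R t c.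
    by move=> t Ht Hp; apply: HR; [rewrite -addSnnS | exact: prefix_trans P0 Hp].
  have HR1 : forall t, at_ T X (j.+1 + d) t -> prefix s1 t -> exists c, R t c.
    by move=> t Ht Hp; apply: HR; [rewrite -addSnnS | exact: prefix_trans P1 Hp].
  rewrite -addSnnS.
  case: (IH _ _ H0 Hj' HR0) => [[t [t' [c [Ht [Ht' [Pt [Pt' [Hn [Rt Rt']]]]]]]]]|[A0 [HA0 FA0]]].
    left; exists t, t', c; do 2 (split => //); split; first exact: prefix_trans P0 Pt.
    by split; first exact: prefix_trans P0 Pt'.
  case: (IH _ _ H1 Hj' HR1) => [[t [t' [c [Ht [Ht' [Pt [Pt' [Hn [Rt Rt']]]]]]]]]|[A1 [HA1 FA1]]].
    left; exists t, t', c; do 2 (split => //); split; first exact: prefix_trans P1 Pt.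
    by split; first exact: prefix_trans P1 Pt'.
  case: (set_0Vmem (A0 :&: A1)) => [HI|[c]].
  + right; exists (A0 :|: A1); split.
    * by rewrite cardsU HI cards0 subn0 expnS mul2n -addnn leq_add.
    * move=> c; rewrite inE => /orP[] Hc.
      - have [t [Ht [Pt Rt]]] := FA0 c Hc; exists t; split => //; split => //; exact: prefix_trans P0 Pt.
      - have [t [Ht [Pt Rt]]] := FA1 c Hc; exists t; split => //; split => //; exact: prefix_trans P1 Pt.
  + rewrite inE => /andP[Hc0 Hc1].
    have [t [Ht [Pt Rt]]] := FA0 c Hc0; have [t' [Ht' [Pt' Rt']]] := FA1 c Hc1.
    left; exists t, t', c; do 2 (split => //).
    split; first exact: prefix_trans P0 Pt.
    split; first exact: prefix_trans P1 Pt'.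
    split => //.
    exact: incompat_neq (incompat_ext Hinc Pt Pt').
Qed.

End Skel.

Fixpoint lv (X : seq nat) (j st m : nat) : seq nat :=
  if m is m'.+1 then nth 0 X (j + st) :: lv X (j + st) st m' else [::].

Lemma size_lv X j st m : size (lv X j st m) = m.
Proof. by elim: m j => [|m IH] j //=; rewrite IH. Qed.

Lemma lv_sub X j st m : j + m * st < size X -> {subset lv X j st m <= X}.
Proof.
elim: m j => [|m IH] j //= Hj y; rewrite inE => /orP[/eqP ->|Hy].
- apply: mem_nth; apply: leq_ltn_trans Hj; rewrite mulSn leq_add2l; exact: leq_addr.
- apply: (IH (j + st)) => //; rewrite -addnA -mulSn //.
Qed.

Lemma lv_sorted X j st m : sorted ltn X -> 0 < st -> j + m * st < size X ->
  sorted ltn (nth 0 X j :: lv X j st m).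
Proof.
move=> HX Hst; elim: m j => [|m IH] j //= Hj.
apply/andP; split.
- have H1 : j + st < size X by apply: leq_ltn_trans Hj; rewrite mulSn leq_add2l; exact: leq_addr.
  apply: (sorted_ltn_nth ltn_trans 0 HX); rewrite ?inE //=.
  + exact: leq_ltn_trans (leq_addr st j) H1.
  + by rewrite -[X in X < _]addn0 ltn_add2l.
- by apply: (IH (j + st)); rewrite -addnA -mulSn.
Qed.

Lemma e_inv_spec k : k < 2 ^ e_inv k.
Proof. by rewrite /e_inv; case: ex_minnP. Qed.

Lemma e_inv_gt0 k : 0 < k -> 0 < e_inv k.
Proof. move=> Hk; have := e_inv_spec k; case: (e_inv k) => //=; rewrite expn0; clear -Hk; lia. Qed.

Fixpoint Sz (x e i : nat) : nat :=
  match i with 0 => x.+1 | i'.+1 => (Sz x e i').-1 * e + 1 end.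

Lemma Sz_gt0 x e i : 0 < Sz x e i.
Proof. by case: i => //= i; rewrite addn1. Qed.

Definition Qc (T : seq str) (Y : seq nat) k (C : str -> 'I_k) (c : 'I_k) (l : str) : Prop :=
  exists t, t \in T /\ size t = maxX Y /\ prefix l t /\ C t = c.

Lemma pers_claim k (T : seq str) (Y : seq nat) (C : str -> 'I_k) :
  quasistrong Y T -> forall m s j, at_ T Y j s -> j + m * e_inv k < size Y ->
  exists c, good T (fun _ _ => True) (Qc T Y C c) (lv Y j (e_inv k) m) s.
Proof.
move=> HQ; elim=> [|m IH] s j Hs Hj.
- have [t [[tT Ht] Hp]] := ext HQ Hs (j' := (size Y).-1) ltac:(move: Hj; clear; lia) ltac:(move: Hj; clear; lia).
  exists (C t); exists t; split => //; split => //; by rewrite Ht /maxX nth_last.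
- set e := e_inv k in Hj IH *.
  have Hje : j + e < size Y by move: Hj; rewrite mulSn; clear; lia.
  have HR : forall t, at_ T Y (j + e) t -> prefix s t ->
      exists c, good T (fun _ _ => True) (Qc T Y C c) (lv Y (j + e) e m) t.
    by move=> t Ht _; apply: IH Ht _; move: Hj; rewrite mulSn; clear; lia.
  case: (php HQ Hs Hje HR) => [[t [t' [c [[tT Ht] [[t'T Ht'] [Pt [Pt' [Hn [Rt Rt']]]]]]]]]|[A [HA _]]].
  + exists c => /=; exists t, t'; do 6 (split => //).
    split; first by apply: neq_incompat => //; rewrite Ht Ht'.
    by do 2 (split => //).
  + exfalso; have := e_inv_spec k; rewrite -/e => Hk.
    have := leq_trans HA (max_card A); rewrite card_ord; clear -Hk; lia.
Qed.

Lemma pers k : 0 < k -> forall i Y, sorted ltn Y -> 0 < size Y ->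
  Sz (head 0 Y) (e_inv k) i <= size Y -> persistent k i Y.
Proof.
move=> Hk; elim=> [|i IH] Y HY Hs H; first by rewrite /= /omega_large /minX.
set e := e_inv k in H *; set m := Sz (head 0 Y) e i in H *.
have He : 0 < e := e_inv_gt0 Hk.
have Hm : 0 < m := Sz_gt0 _ _ _.
have Hlt : 0 + m.-1 * e < size Y by move: H => /=; rewrite -/e -/m add0n addn1.
exists (nth 0 Y 0 :: lv Y 0 e m.-1); split; [|split; [|split]].
- exact: lv_sorted.
- move=> y; rewrite inE => /orP[/eqP ->|Hy]; first exact: mem_nth.
  exact: lv_sub Hlt _ Hy.
- apply: IH => /=.
  + exact: lv_sorted.
  + by [].
  + by rewrite size_lv nth0 -/e -/m prednK.
- move=> T HT HQ C.
  have [r [rT Hr]] := root_ex HQ Hs.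
  have [c Hg] := pers_claim (m := m.-1) C HQ (conj rT Hr) Hlt.
  have Hsort : sorted ltn (size r :: lv Y 0 (e_inv k) m.-1) by rewrite Hr; exact: lv_sorted.
  have [S [trS [subS [_ [_ [qS [_ lfS]]]]]]] := good_tree HT rT Hsort Hg.
  exists c, S; split => //; split => //; split; first by rewrite -Hr.
  exact: lfS.
Qed.

Section Stage.
Variables (X : seq nat) (k : nat) (C : str -> 'I_k) (Tf : str -> seq str) (rs : seq str) (M : nat).
Hypothesis HX : sorted ltn X.
Hypothesis HT : forall r, r \in rs -> is_tree (Tf r) /\ quasistrong X (Tf r).
Hypothesis HM : 0 < M.

Fixpoint D (p : nat) : nat := if p is p'.+1 then M * (D p').+1 else 0.

Definition hiF (lo d : nat) := lo + M.-1 * d.+1 + 1.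

Lemma hiF_d lo d : hiF lo d + d = lo + M * d.+1.
Proof. rewrite /hiF; case: M HM => // M' _ /=; rewrite mulSn; lia. Qed.

Definition Dense (r w : str) (c : 'I_k) (lo hi d : nat) : Prop :=
  forall u j, lo <= j -> j <= hi -> at_ (Tf r) X j u -> prefix w u ->
    exists t, at_ (Tf r) X (j + d) t /\ prefix u t /\
      exists z, prefix u z /\ prefix z t /\ C z = c.

Lemma notDense r w c lo hi d : ~ Dense r w c lo hi d ->
  exists u j, lo <= j /\ j <= hi /\ at_ (Tf r) X j u /\ prefix w u /\
    forall t, at_ (Tf r) X (j + d) t -> prefix u t ->
      forall z, prefix u z -> prefix z t -> C z <> c.
Proof.
move=> H; apply: NNPP => H2; apply: H => u j H1 H1' H3 H4; apply: NNPP => H5; apply: H2.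
exists u, j; split; first exact: H1. split; first exact: H1'. split; first exact: H3.
split; first exact: H4.
move=> t Ht Hut z Huz Hzt Hc; apply: H5.
by exists t; split => //; split => //; exists z.
Qed.

Definition Inv (lo B : nat) (w : str -> str) (F : str -> {set 'I_k}) : Prop :=
  forall r, r \in rs ->
    (exists jw, jw <= lo /\ at_ (Tf r) X jw (w r)) /\
    (forall t z, at_ (Tf r) X B t -> prefix (w r) t -> prefix (w r) z -> prefix z t ->
       C z \in F r) /\
    0 < #|F r|.

Definition pot (F : str -> {set 'I_k}) := \sum_(r <- rs) (#|F r|).-1.

Lemma sum_ge (f : str -> nat) r0 : r0 \in rs -> f r0 <= \sum_(r <- rs) f r.
Proof. by move=> H; rewrite (big_rem r0 H) /= leq_addr. Qed.

Lemma sum_lt (f g : str -> nat) r0 : r0 \in rs -> (forall r, f r <= g r) -> f r0 < g r0 ->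
  \sum_(r <- rs) f r < \sum_(r <- rs) g r.
Proof.
move=> H Hle Hlt; rewrite (big_rem r0 H) [X in _ < X](big_rem r0 H) /=.
have := leq_sum (rem r0 rs) (P := predT) (fun i _ => Hle i).
move: (\sum_(i <- rem r0 rs) f i) (\sum_(i <- rem r0 rs) g i) => a b Hab.
move: Hlt Hab; clear; lia.
Qed.

Lemma step p lo w F : lo + D p.+1 < size X -> Inv lo (lo + D p.+1) w F ->
  (forall r, r \in rs -> exists c, Dense r (w r) c lo (hiF lo (D p)) (D p)) \/
  (exists r0 u j c0, r0 \in rs /\ lo <= j /\ j <= hiF lo (D p) /\ c0 \in F r0 /\
     1 < #|F r0| /\ at_ (Tf r0) X j u /\ prefix (w r0) u /\
     forall t, at_ (Tf r0) X (j + D p) t -> prefix u t ->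
       forall z, prefix u z -> prefix z t -> C z <> c0).
Proof.
move=> HB Hinv.
have HBd : lo + D p.+1 = hiF lo (D p) + D p by rewrite hiF_d.
case: (classic (forall r, r \in rs -> exists c, c \in F r /\ Dense r (w r) c lo (hiF lo (D p)) (D p))) => [Hall|Hn].
  by left => r Hr; have [c [_ Hc]] := Hall r Hr; exists c.
right.
have [r0 Hr0] := not_all_ex_not _ _ Hn.
have r0in : r0 \in rs by apply: NNPP => H; apply: Hr0 => /H.
have Hnd : forall c, c \in F r0 -> ~ Dense r0 (w r0) c lo (hiF lo (D p)) (D p).
  by move=> c Hc Hd; apply: Hr0 => _; exists c.
have [[jw [Hjw Hw]] [Havoid Hcard]] := Hinv r0 r0in.
have /card_gt0P [c0 Hc0] := Hcard.
have [u [j [Hlo [Hhi [Hu [Hwu Hav]]]]]] := notDense (Hnd c0 Hc0).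
have [HTr HQr] := HT r0in.
have H1 : 1 < #|F r0|.
  rewrite ltnNge; apply/negP => Hle; apply: (Hnd c0 Hc0) => u' j' Hlo' Hhi' Hu' Hwu'.
  have Hj'd : j' + D p < size X.
    by apply: leq_ltn_trans HB; rewrite HBd leq_add2r.
  have [t [Ht Hut]] := ext HQr Hu' (j' := j' + D p) (leq_addr _ _) Hj'd.
  exists t; split => //; split => //; exists u'; split; first exact: prefix_refl.
  split => //.
  have Hj'B : j' <= lo + D p.+1 by rewrite HBd; apply: leq_trans Hhi' (leq_addr _ _).
  have [t' [Ht' Hut']] := ext HQr Hu' Hj'B HB.
  have Hcu := Havoid t' u' Ht' (prefix_trans Hwu' Hut') Hwu' Hut'.
  move/card_le1_eqP: Hle => Hle; exact: (Hle _ _ Hc0 Hcu).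
by exists r0, u, j, c0.
Qed.

Lemma stage : forall p lo w F, pot F <= p -> lo + D p.+1 < size X ->
  Inv lo (lo + D p.+1) w F ->
  exists lo' d w', lo' + M * d.+1 < size X /\
    forall r, r \in rs -> (exists jw, jw <= lo' /\ at_ (Tf r) X jw (w' r)) /\
      exists c, Dense r (w' r) c lo' (hiF lo' d) d.
Proof.
elim=> [|p IH] lo w F Hpot HB Hinv; case: (step HB Hinv) =>
  [Hall|[r0 [u [j [c0 [r0in [Hlo [Hhi [Hc0 [H1 [Hu [Hwu Hav]]]]]]]]]]]].
- exists lo, (D 0), w; split; first exact: HB.
  by move=> r Hr; split; [exact: (proj1 (Hinv r Hr)) | exact: Hall r Hr].
- exfalso; have := sum_ge (fun r => (#|F r|).-1) r0in; rewrite -/(pot F).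
  move: Hpot H1; clear; lia.
- exists lo, (D p.+1), w; split; first exact: HB.
  by move=> r Hr; split; [exact: (proj1 (Hinv r Hr)) | exact: Hall r Hr].
- set w' := fun r => if r == r0 then u else w r.
  set F' := fun r => if r == r0 then F r0 :\ c0 else F r.
  have HBd : lo + D p.+2 = hiF lo (D p.+1) + D p.+1 by rewrite hiF_d.
  have HjB : j + D p.+1 <= lo + D p.+2 by rewrite HBd leq_add2r.
  have HcardD : #|F r0| = #|F r0 :\ c0| + 1 by rewrite (cardsD1 c0 (F r0)) Hc0 addnC.
  apply: (IH j w' F').
  + have : pot F' < pot F.
      apply: (sum_lt r0in).
      * by move=> r; rewrite /F'; case: eqP => // ->; rewrite HcardD; clear; lia.
      * by rewrite /F' eqxx HcardD; move: H1; rewrite HcardD; clear; lia.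
    by move: Hpot; clear; lia.
  + exact: leq_ltn_trans HjB HB.
  + move=> r Hr; have [[jw [Hjw Hw]] [Havoid Hcard]] := Hinv r Hr.
    have [HTr HQr] := HT Hr.
    rewrite /w' /F'; case: eqP => [Er|Nr].
    * subst r; split; first by exists j; split.
      split; last by move: H1; rewrite HcardD; clear; lia.
      move=> t z Ht Hut Huz Hzt; rewrite !inE; apply/andP; split.
      - by apply/eqP; apply: (Hav t Ht Hut z Huz Hzt).
      - have [t' [Ht' Htt']] := ext HQr Ht HjB HB.
        apply: (Havoid t' z Ht').
        + exact: prefix_trans Hwu (prefix_trans Hut Htt').
        + exact: prefix_trans Hwu Huz.
        + exact: prefix_trans Hzt Htt'.
    * split; first by exists jw; split => //; exact: leq_trans Hjw Hlo.
      split => // t z Ht Hwt Hwz Hzt.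
      have [t' [Ht' Htt']] := ext HQr Ht HjB HB.
      apply: (Havoid t' z Ht' (prefix_trans Hwt Htt') Hwz (prefix_trans Hzt Htt')).
Qed.

End Stage.

Lemma g_ge m k : 0 < k -> 2 <= m -> m.-1 * e_inv k + m.-1 <= g_fun m k.
Proof.
move=> Hk Hm; rewrite /g_fun leq_add2l.
have H : (m.-1 * 2) %/ 2 <= (m.-1 * m) %/ 2 by apply: leq_div2r; rewrite leq_mul2l Hm orbT.
by rewrite mulnK in H.
Qed.

Lemma gbar_ge x k i : 0 < k -> x + k + 1 <= gbar x k i.
Proof.
move=> Hk; elim: i => [|i IH] //=.
have He := e_inv_gt0 Hk.
have H2 : 2 <= gbar x k i by apply: leq_trans IH; move: Hk; clear; lia.
apply: leq_trans IH _; apply: leq_trans (g_ge Hk H2).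
have : gbar x k i <= (gbar x k i).-1 * e_inv k + (gbar x k i).-1.
  have : (gbar x k i).-1 <= (gbar x k i).-1 * e_inv k by apply: leq_pmulr.
  move: H2; clear; lia.
done.
Qed.

Lemma Sz_le x k i : 0 < k -> Sz x (e_inv k) i <= gbar x k i.
Proof.
move=> Hk; elim: i => [|i IH] /=; first by move: Hk; clear; lia.
have H2 : 2 <= gbar x k i by apply: leq_trans (gbar_ge x i Hk); move: Hk; clear; lia.
apply: leq_trans (g_ge Hk H2).
have : (Sz x (e_inv k) i).-1 * e_inv k <= (gbar x k i).-1 * e_inv k.
  by apply: leq_mul => //; move: IH; clear; lia.
move: H2; clear; lia.
Qed.

Lemma D_lt M p : D M p < M.+1 ^ p.
Proof.
elim: p => [|p IH] //=.
rewrite expnS; apply: (@leq_ltn_trans (M * M.+1 ^ p)); first by rewrite leq_mul2l IH orbT.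
rewrite ltn_mul2r expn_gt0 /=; done.
Qed.

Lemma final_bound x k i M N : 0 < k -> M <= gbar x k i -> N = 2 ^ x ->
  M.+1 ^ (N * k.-1).+1 <= hbar x (gbar x k i) k.
Proof.
move=> Hk HM HN; set n := gbar x k i in HM *.
have Hkn : k <= n by apply: leq_trans (gbar_ge x i Hk); clear; lia.
have HN0 : 0 < N by rewrite HN expn_gt0.
have He := e_inv_gt0 Hk.
rewrite /hbar /h_fun -HN.
apply: leq_trans (leq_pmulr _ _); last by rewrite expn_gt0 Hk.
have H1 : M.+1 ^ (N * k.-1).+1 <= (2 ^ n) ^ (N * k.-1).+1.
  by rewrite leq_exp2r // (leq_ltn_trans HM) // ltn_expl.
apply: leq_trans H1 _; rewrite -expnM leq_exp2l //.
have Hnn : n * n <= 2 ^ (5 * n).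
  have := ltn_expl n (isT : 1 < 2) => Hn.
  apply: leq_trans (leq_mul (ltnW Hn) (ltnW Hn)) _.
  by rewrite -expnD leq_exp2l //; clear; lia.
have H3 : (N * k.-1).+1 <= N * n by move: HN0 Hkn Hk; clear; nia.
apply: leq_trans (leq_mul (leqnn n) H3) _.
have H4 : n * (N * n) <= N * 2 ^ (5 * n) by move: Hnn; clear; nia.
apply: leq_trans H4 _.
by rewrite -mulnA leq_pmull.
Qed.

Definition Ec k (C : str -> 'I_k) (c : 'I_k) (a b : str) : Prop :=
  exists z, prefix a z /\ prefix z b /\ C z = c.

Section Build.
Variables (X : seq nat) (k : nat) (C : str -> 'I_k) (T : seq str) (M : nat).
Hypothesis HX : sorted ltn X.
Hypothesis HQ : quasistrong X T.
Hypothesis HM : 0 < M.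
Variables (w : str) (c : 'I_k) (lo d : nat).
Hypothesis Hdense : forall u j, lo <= j -> j <= hiF M lo d -> at_ T X j u -> prefix w u ->
    exists t, at_ T X (j + d) t /\ prefix u t /\
      exists z, prefix u z /\ prefix z t /\ C z = c.
Hypothesis Hsz : lo + M * d.+1 < size X.

Lemma build : forall m s u j, prefix s u -> at_ T X j u -> prefix w u -> lo <= j ->
  j + m * d.+1 <= lo + M * d.+1 -> good T (Ec C c) (fun _ => True) (lv X j d.+1 m) s.
Proof.
have HB := hiF_d HX HM lo d.
elim=> [|m IH] s u j Hsu Hu Hwu Hlo Hj //=.
have Hj1 : j.+1 <= hiF M lo d.
  move: Hj; rewrite -HB mulSn => Hj; move: Hj; clear; lia.
have Hjs : j.+1 < size X.
  apply: leq_ltn_trans Hsz; rewrite -HB; apply: leq_trans Hj1 (leq_addr _ _).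
have [u0 [u1 [H0 [H1 [P0 [P1 Hinc]]]]]] := kids HQ Hu Hjs.
have [t0 [[t0T Ht0] [Pt0 [z0 [Hz0 [Hz0' Cz0]]]]]] := Hdense (leq_trans Hlo (leqnSn j)) Hj1 H0 (prefix_trans Hwu P0).
have [t1 [[t1T Ht1] [Pt1 [z1 [Hz1 [Hz1' Cz1]]]]]] := Hdense (leq_trans Hlo (leqnSn j)) Hj1 H1 (prefix_trans Hwu P1).
have Ej : j.+1 + d = j + d.+1 by rewrite addSnnS.
rewrite Ej in Ht0 Ht1.
have Hsu0 : prefix s t0 := prefix_trans Hsu (prefix_trans P0 Pt0).
have Hsu1 : prefix s t1 := prefix_trans Hsu (prefix_trans P1 Pt1).
exists t0, t1; do 6 (split => //).
split; first exact: incompat_ext Hinc Pt0 Pt1.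
split; first by exists z0; split => //; apply: prefix_trans Hsu (prefix_trans P0 Hz0).
split; first by exists z1; split => //; apply: prefix_trans Hsu (prefix_trans P1 Hz1).
have Hlo' : lo <= j + d.+1 by apply: leq_trans Hlo (leq_addr _ _).
have Hj' : j + d.+1 + m * d.+1 <= lo + M * d.+1 by rewrite -addnA -mulSn.
split.
- apply: (IH t0 t0 (j + d.+1) (prefix_refl _) (conj t0T Ht0)) => //.
  exact: prefix_trans Hwu (prefix_trans P0 Pt0).
- apply: (IH t1 t1 (j + d.+1) (prefix_refl _) (conj t1T Ht1)) => //.
  exact: prefix_trans Hwu (prefix_trans P1 Pt1).
Qed.

End Build.

Lemma nth_mono (X : seq nat) i j : sorted ltn X -> i <= j -> j < size X -> nth 0 X i <= nth 0 X j.
Proof.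
move=> HX; rewrite leq_eqVlt => /orP[/eqP ->|Hij] Hj //.
apply: ltnW; apply: (sorted_ltn_nth ltn_trans 0 HX) => //; rewrite inE.
exact: ltn_trans Hij Hj.
Qed.

Lemma sorted_head_le (a a' : nat) L : sorted ltn (a' :: L) -> a <= a' -> sorted ltn (a :: L).
Proof. by case: L => //= b L /andP[H1 H2] H; rewrite H2 andbT (leq_ltn_trans H H1). Qed.

Lemma sum_const_pred (l : seq str) (n : nat) : \sum_(r <- l) n = size l * n.
Proof. by elim: l => [|a l IH]; rewrite ?big_nil ?big_cons ?IH ?mulSn. Qed.

Theorem lemma2p18 (k i : nat) (X : seq nat) :
  1 <= k -> sorted ltn X -> X != [::] ->
  hbar (minX X) (gbar (minX X) k i) k <= size X ->
  superpersistent k i X.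
Proof.
move=> Hk HX Hne Hsize Tf HTf C.
set x0 := minX X in Hsize HTf *.
have Hs0 : 0 < size X by case: X Hne {HX Hsize HTf x0}.
have Hx0 : nth 0 X 0 = x0 by rewrite nth0.
set e := e_inv k. set M := Sz x0 e i.
have HM : 0 < M := Sz_gt0 _ _ _.
set rs := [seq tval t | t : x0.-tuple bool].
have Hrs : forall r, (r \in rs) = (size r == x0).
  move=> r; apply/mapP/eqP.
  - by case=> t _ ->; rewrite size_tuple.
  - move=> Hr; have Hr' : size r == x0 by rewrite Hr.
    by exists (Tuple Hr'); rewrite ?mem_enum.
have Hsrs : size rs = 2 ^ x0 by rewrite size_map -cardE card_tuple card_bool.
have HT : forall r, r \in rs -> is_tree (Tf r) /\ quasistrong X (Tf r).
  by move=> r; rewrite Hrs => /eqP Hr; apply: HTf.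
set w0 := fun r => head [::] [seq s <- Tf r | size s == nth 0 X 0].
have Hw0 : forall r, r \in rs -> at_ (Tf r) X 0 (w0 r).
  move=> r Hr; have [_ HQ] := HT r Hr; have [s [sT Hs]] := root_ex HQ Hs0.
  rewrite /w0; case E: [seq s <- Tf r | size s == nth 0 X 0] => [|a l].
  - have : s \in [seq s <- Tf r | size s == nth 0 X 0] by rewrite mem_filter Hs eqxx.
    by rewrite E.
  - have : a \in [seq s <- Tf r | size s == nth 0 X 0] by rewrite E mem_head.
    by rewrite mem_filter => /andP[/eqP H1 H2].
set F0 := fun r : str => [set: 'I_k].
set P0 := size rs * k.-1.
have Hpot : pot rs F0 <= P0 by rewrite /pot /F0 cardsT card_ord sum_const_pred.
have HB : 0 + D M P0.+1 < size X.
  rewrite add0n; apply: leq_trans (D_lt M P0.+1) _; apply: leq_trans Hsize.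
  by apply: final_bound => //; apply: Sz_le.
have Hinv : Inv X C Tf rs 0 (0 + D M P0.+1) w0 F0.
  move=> r Hr; split; first by exists 0; split => //; apply: Hw0.
  split; first by move=> *; rewrite in_setT.
  by rewrite cardsT card_ord.
have [lo [d [w [Hsz Hres]]]] := stage HX HT HM Hpot HB Hinv.
set Y := nth 0 X 0 :: lv X lo d.+1 M.
have HYs : sorted ltn Y.
  apply: (sorted_head_le (lv_sorted HX (ltn0Sn d) Hsz)).
  apply: nth_mono => //; apply: leq_ltn_trans Hsz; exact: leq_addr.
have Hex : forall r, exists S, size r = minX X ->
    is_tree S /\ {subset S <= Tf r} /\ quasistrong Y S /\ prehomogeneous C Y S.
  move=> r; case: (eqVneq (size r) x0) => [Hr|Hr]; last by exists [::] => /eqP; rewrite (negbTE Hr).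
  have Hr' : r \in rs by rewrite Hrs Hr.
  have [HTr HQr] := HT r Hr'.
  have [[jw [Hjw [wT Hw]]] [c Hd]] := Hres r Hr'.
  have Hlo : lo < size X by apply: leq_ltn_trans Hsz; exact: leq_addr.
  set s0 := take (nth 0 X 0) (w r).
  have Hs0s : size s0 = nth 0 X 0.
    by rewrite size_takel // Hw; apply: nth_mono => //; exact: leq_ltn_trans Hjw Hlo.
  have s0T : s0 \in Tf r by apply: HTr wT (prefix_take _ _).
  have [u [Hu Hwu]] := ext HQr (conj wT Hw) Hjw Hlo.
  have Hg := build HX HQr HM Hd Hsz (prefix_trans (prefix_take (w r) (nth 0 X 0)) Hwu) Hu Hwu (leqnn lo) (leqnn _).
  have Hsort : sorted ltn (size s0 :: lv X lo d.+1 M) by rewrite Hs0s.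
  have [S [trS [subS [_ [_ [qS [edS _]]]]]]] := good_tree HTr s0T Hsort Hg.
  rewrite Hs0s in qS edS.
  exists S => _; split => //; split => //; split => //.
  exists c => j Hj a b aS bS Ha Hb Hab.
  have [z [H1 [H2 H3]]] := edS j Hj a b aS bS Ha Hb Hab.
  by exists z; split => //; apply: trS bS H2.
exists Y, (fun r => proj1_sig (constructive_indefinite_description _ (Hex r))).
split => //; split; [|split].
- move=> y; rewrite inE => /orP[/eqP ->|Hy]; first exact: mem_nth.
  exact: lv_sub Hsz _ Hy.
- apply: pers => //=.
  by rewrite size_lv Hx0 -/e -/M.
- by move=> r Hr; apply: (proj2_sig (constructive_indefinite_description _ (Hex r))).
Qed.
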